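(* Let $p$ be a prime, $m\ge1$, $q=p^m$, $\omega$ a primitive $q$-th root of unity in $\mathbb C$, and $U_q$ the set of $q$-th roots of unity. Let $k,r\ge0$, and for $t\in[k]$ let $\alpha_t,\alpha_{t,1},\dots,\alpha_{t,r}\in\{0,1,\dots,q-1\}$. Let $\mathcal L'$ be the CSP instance with variables $x_1,\dots,x_k,y_1,\dots,y_r$, all with domain $U_q$, and constraints $x_t=\omega^{\alpha_t}y_1^{\alpha_{t,1}}\cdots y_r^{\alpha_{t,r}}$ for $t\in[k]$. Let $$G'=\{x_t-\omega^{\alpha_t}y_1^{\alpha_{t,1}}\cdots y_r^{\alpha_{t,r}}:t\in[k]\}\cup\{y_j^{q}-1:j\in[r]\}\subseteq\mathbb C[x_1,\dots,x_k,y_1,\dots,y_r].$$ Then $G'$ is a Gröbner basis, with respect to the lexicographic order with $x_1\succ\dots\succ x_k\succ y_1\succ\dots\succ y_r$, of the ideal $\mathtt I(\mathcal L')=\mathbf I(\mathsf{Sol}(\mathcal L'))$; in particular $\langle G'\rangle=\mathbf I(\mathsf{Sol}(\mathcal L'))$.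
   Context: $\mathsf{Sol}(\mathcal L')\subseteq\mathbb C^{k+r}$ is the set of points with all coordinates in $U_q$ satisfying the constraints. $\mathtt I(\mathcal L')$ is the ideal generated by the domain polynomials $z^q-1$ for every variable $z$ and the constraint polynomials; $\mathbf I(S)$ denotes the ideal of all polynomials vanishing on the set $S$. A Gröbner basis of an ideal $I$ for a monomial order is a finite subset $G\subseteq I$ with $\langle\mathrm{LT}(g):g\in G\rangle=\langle\mathrm{LT}(I)\rangle$. Lexicographic order: $x^\alpha\succ x^\beta$ iff the leftmost nonzero entry of $\alpha-\beta$ is positive. *)

(* Defs.v *)
From HB Require Import structures.
From mathcomp Require Import all_boot all_algebra.
From mathcomp Require Import reals.
From mathcomp Require Import complex.
From mathcomp Require Import mpoly.
Set Implicit Arguments. Unset Strict Implicit. Unset Printing Implicit Defensive.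
Import GRing.Theory Num.Theory.
Local Open Scope ring_scope.

Definition lex_gt (n : nat) (a b : 'X_{1.. n}) : bool :=
  [exists i : 'I_n,
     [forall j : 'I_n, (j < i)%N ==> (a j == b j)] && (b i < a i)%N].

Definition is_lex_LT (C : comRingType) (n : nat) (f t : {mpoly C[n]}) : Prop :=
  exists2 mo : 'X_{1.. n}, mo \in msupp f &
    (forall mo', mo' \in msupp f -> mo' != mo -> lex_gt mo mo') /\
    t = f@_mo *: 'X_[mo].

Definition ideal_gen (C : comRingType) (n : nat) (S : {mpoly C[n]} -> Prop)
  (f : {mpoly C[n]}) : Prop :=
  exists (N : nat) (g c : 'I_N -> {mpoly C[n]}),
    (forall i, S (g i)) /\ f = \sum_(i < N) c i * g i.

Definition lex_LTs (C : comRingType) (n : nat) (S : {mpoly C[n]} -> Prop)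
  (t : {mpoly C[n]}) : Prop :=
  exists2 f, S f & is_lex_LT f t.

Definition is_lex_groebner (C : comRingType) (n : nat) (G : seq {mpoly C[n]})
  (I : {mpoly C[n]} -> Prop) : Prop :=
  (forall g, g \in G -> I g) /\
  (forall h, ideal_gen (lex_LTs (fun g => g \in G)) h <-> ideal_gen (lex_LTs I) h).

Definition vanishing_ideal (C : comRingType) (n : nat) (S : ('I_n -> C) -> Prop)
  (f : {mpoly C[n]}) : Prop :=
  forall v, S v -> f.@[v] = 0.

Section CSP.
Variables (C : comRingType) (q k r : nat) (w : C).
Variables (a : 'I_k -> 'I_q) (A : 'I_k -> 'I_r -> 'I_q).

Definition xv (t : 'I_k) : 'I_(k + r) := lshift r t.
Definition yv (j : 'I_r) : 'I_(k + r) := rshift k j.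

Definition cons_poly (t : 'I_k) : {mpoly C[k + r]} :=
  'X_(xv t) - (w ^+ a t) *: \prod_(j < r) 'X_(yv j) ^+ A t j.

Definition dom_poly (i : 'I_(k + r)) : {mpoly C[k + r]} := 'X_i ^+ q - 1.

Definition IL_gens (f : {mpoly C[k + r]}) : Prop :=
  (exists i, f = dom_poly i) \/ (exists t, f = cons_poly t).

Definition IL : {mpoly C[k + r]} -> Prop := ideal_gen IL_gens.

Definition SolL (v : 'I_(k + r) -> C) : Prop :=
  (forall i, v i ^+ q = 1) /\
  (forall t, v (xv t) = w ^+ a t * \prod_(j < r) v (yv j) ^+ A t j).

Definition Gprime : seq {mpoly C[k + r]} :=
  [seq cons_poly t | t <- enum 'I_k] ++ [seq dom_poly (yv j) | j <- enum 'I_r].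
End CSP.

(* Main.v *)
Require Import Defs.
From HB Require Import structures.
From mathcomp Require Import all_boot all_algebra.
From mathcomp Require Import reals complex mpoly.
From mathcomp Require Import zify ring.
Import GRing.Theory Num.Theory.
Local Open Scope ring_scope.
Set Implicit Arguments. Unset Strict Implicit.

Section IG.
Variables (C : comNzRingType) (n : nat).
Implicit Types (S T : {mpoly C[n]} -> Prop) (f g h : {mpoly C[n]}).

Lemma ig0 S : ideal_gen S 0.
Proof. by exists 0%N, (fun _ => 0), (fun _ => 0); split=> [[]//|]; rewrite big_ord0. Qed.

Lemma igS S g : S g -> ideal_gen S g.
Proof.
move=> Sg; exists 1%N, (fun _ => g), (fun _ => 1); split=> // .
by rewrite big_ord1 mul1r.
Qed.

Lemma igD S f g : ideal_gen S f -> ideal_gen S g -> ideal_gen S (f + g).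
Proof.
move=> [N1 [g1 [c1 [H1 ->]]]] [N2 [g2 [c2 [H2 ->]]]].
exists (N1 + N2)%N, (fun i => match split i with inl x => g1 x | inr y => g2 y end),
  (fun i => match split i with inl x => c1 x | inr y => c2 y end); split.
  by move=> i; case: (split i).
rewrite big_split_ord /=; congr (_ + _); apply: eq_bigr => i _.
  by rewrite (unsplitK (inl i)).
by rewrite (unsplitK (inr i)).
Qed.

Lemma igM S h f : ideal_gen S f -> ideal_gen S (h * f).
Proof.
move=> [N [g [c [H ->]]]]; exists N, g, (fun i => h * c i); split=> //.
by rewrite mulr_sumr; apply: eq_bigr => i _; rewrite mulrA.
Qed.

Lemma igN S f : ideal_gen S f -> ideal_gen S (- f).
Proof. by move=> H; rewrite -mulN1r; apply: igM. Qed.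

Lemma igB S f g : ideal_gen S f -> ideal_gen S g -> ideal_gen S (f - g).
Proof. by move=> Hf Hg; apply: igD => //; apply: igN. Qed.

Lemma igZ S c f : ideal_gen S f -> ideal_gen S (c *: f).
Proof. by move=> H; rewrite -mul_mpolyC; apply: igM. Qed.

Lemma ig_sum S (I : Type) (s : seq I) (F : I -> {mpoly C[n]}) :
  (forall i, ideal_gen S (F i)) -> ideal_gen S (\sum_(i <- s) F i).
Proof.
move=> H; elim: s => [|x s IH]; first by rewrite big_nil; apply: ig0.
by rewrite big_cons; apply: igD.
Qed.

Lemma ig_mono S T f : (forall g, S g -> ideal_gen T g) -> ideal_gen S f -> ideal_gen T f.
Proof.
move=> ST [N [g [c [H ->]]]].
apply: ig_sum => i; apply: igM; exact: ST.
Qed.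

Lemma ig_vanish S (P : ('I_n -> C) -> Prop) f :
  (forall g, S g -> vanishing_ideal P g) -> ideal_gen S f -> vanishing_ideal P f.
Proof.
move=> SP [N [g [c [H ->]]]] v Pv.
apply: (big_ind (fun x : {mpoly C[n]} => x.@[v] = 0)).
- by rewrite meval0.
- by move=> x y Hx Hy; rewrite mevalD Hx Hy addr0.
- by move=> i _; rewrite mevalM (SP _ (H i) v Pv) mulr0.
Qed.
End IG.

Section Main.
Variables (C : numFieldType) (q k r : nat) (w : C) (a : 'I_k -> 'I_q) (A : 'I_k -> 'I_r -> 'I_q).
Hypotheses (hq : (0 < q)%N) (hw : q.-primitive_root w).
Local Notation n := (k + r)%N.
Local Notation Poly := {mpoly C[n]}.

Definition J (f : Poly) := ideal_gen (fun g => g \in Gprime w a A) f.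
Definition eqv (f g : Poly) := J (f - g).

Lemma eqv_refl f : eqv f f.
Proof. by rewrite /eqv subrr; apply: ig0. Qed.
Lemma eqv_sym f g : eqv f g -> eqv g f.
Proof. by rewrite /eqv => H; rewrite -opprB; apply: igN. Qed.
Lemma eqv_trans f g h : eqv f g -> eqv g h -> eqv f h.
Proof.
by rewrite /eqv => H1 H2; have := igD H1 H2; rewrite addrA subrK.
Qed.
Lemma eqvD f1 f2 g1 g2 : eqv f1 g1 -> eqv f2 g2 -> eqv (f1 + f2) (g1 + g2).
Proof.
by rewrite /eqv => H1 H2; have := igD H1 H2; rewrite opprD addrACA.
Qed.
Lemma eqvM f1 f2 g1 g2 : eqv f1 g1 -> eqv f2 g2 -> eqv (f1 * f2) (g1 * g2).
Proof.
rewrite /eqv => H1 H2.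
have -> : f1 * f2 - g1 * g2 = f2 * (f1 - g1) + g1 * (f2 - g2).
  by ring.
by apply: igD; apply: igM.
Qed.
Lemma eqvZ c f g : eqv f g -> eqv (c *: f) (c *: g).
Proof. by rewrite /eqv => H; rewrite -scalerBr; apply: igZ. Qed.
Lemma eqvX f g e : eqv f g -> eqv (f ^+ e) (g ^+ e).
Proof.
move=> H; elim: e => [|e IH]; first by rewrite !expr0; apply: eqv_refl.
by rewrite !exprS; apply: eqvM.
Qed.
Lemma eqv_prod (I : Type) (s : seq I) (F G : I -> Poly) :
  (forall i, eqv (F i) (G i)) -> eqv (\prod_(i <- s) F i) (\prod_(i <- s) G i).
Proof.
move=> H; elim: s => [|x s IH]; first by rewrite !big_nil; apply: eqv_refl.
by rewrite !big_cons; apply: eqvM.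
Qed.
Lemma eqv_sum (I : Type) (s : seq I) (F G : I -> Poly) :
  (forall i, eqv (F i) (G i)) -> eqv (\sum_(i <- s) F i) (\sum_(i <- s) G i).
Proof.
move=> H; elim: s => [|x s IH]; first by rewrite !big_nil; apply: eqv_refl.
by rewrite !big_cons; apply: eqvD.
Qed.
Lemma eqvJ f : J f -> eqv f 0.
Proof. by rewrite /eqv subr0. Qed.

Lemma prodX (I : Type) (s : seq I) (F : I -> 'X_{1.. n}) :
  \prod_(i <- s) ('X_[F i] : Poly) = 'X_[\sum_(i <- s) F i].
Proof.
elim: s => [|x s IH]; first by rewrite !big_nil mpolyX0.
by rewrite !big_cons IH mpolyXD.
Qed.

Definition Am (t : 'I_k) : 'X_{1.. n} := (\sum_(j < r) U_(yv k j) *+ A t j)%MM.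

Lemma cons_polyE t : Defs.cons_poly w a A t = 'X_(xv r t) - w ^+ a t *: 'X_[Am t].
Proof.
rewrite /Defs.cons_poly /Am -prodX; congr (_ - _ *: _).
by apply: eq_bigr => j _; rewrite mpolyXn.
Qed.

Lemma cons_in t : Defs.cons_poly w a A t \in Gprime w a A.
Proof. by rewrite mem_cat; apply/orP; left; apply: map_f; rewrite mem_enum. Qed.
Lemma dom_in j : @dom_poly C q k r (yv k j) \in Gprime w a A.
Proof. by rewrite mem_cat; apply/orP; right; apply: map_f; rewrite mem_enum. Qed.

Lemma X_eqv t : eqv 'X_(xv r t) (w ^+ a t *: 'X_[Am t]).
Proof. by rewrite /eqv -cons_polyE; apply: igS; apply: cons_in. Qed.
Lemma Y_eqv j : eqv ('X_(yv k j) ^+ q) 1.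
Proof. by apply: igS; apply: dom_in. Qed.

Definition red0 (m : 'X_{1.. n}) : 'X_{1.. n} :=
  (\sum_(t < k) (Am t *+ m (xv r t)) + \sum_(j < r) U_(yv k j) *+ m (yv k j))%MM.
Definition cm (m : 'X_{1.. n}) : C := \prod_(t < k) (w ^+ a t) ^+ m (xv r t).

Lemma red0_cong m : eqv 'X_[m] (cm m *: 'X_[red0 m]).
Proof.
rewrite mpolyXE_id big_split_ord /= /red0 mpolyXD -!prodX.
rewrite scalerAl; apply: eqvM; last first.
  by under [X in eqv _ X]eq_bigr do rewrite -mpolyXn; apply: eqv_refl.
rewrite /cm -scaler_prod.
apply: eqv_prod => t; rewrite -mpolyXn -exprZn; apply: eqvX; exact: X_eqv.
Qed.


Definition modq (mm : 'X_{1.. n}) : 'X_{1.. n} :=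
  [multinom (if (k <= i)%N then mm i %% q else mm i) | i < n].

Lemma yv_of (i : 'I_n) : (k <= i)%N -> exists j, i = yv k j.
Proof.
move=> ki; have lt : (i - k < r)%N by have := ltn_ord i; lia.
by exists (Ordinal lt); apply: val_inj => /=; lia.
Qed.

Lemma mod_cong mm : eqv 'X_[mm] 'X_[modq mm].
Proof.
have [N] : exists N, (mdeg mm < N)%N by exists (mdeg mm).+1.
elim: N mm => [|N IH] mm hN; first by rewrite ltn0 in hN.
have [/existsP [i /andP [ki qi]]|H] :=
  boolP [exists i : 'I_n, (k <= i)%N && (q <= mm i)%N]; last first.
  have -> : modq mm = mm; last by apply: eqv_refl.
  apply/mnmP => j; rewrite mnmE; case: ifP => // kj; rewrite modn_small //.
  by move/existsPn: H => /(_ j); rewrite kj /= -ltnNge.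
set mm' := (mm - U_(i) *+ q)%MM.
have Emm : mm = (mm' + U_(i) *+ q)%MM.
  rewrite submK //; apply/mnm_lepP => j; rewrite mulmnE mnm1E.
  by case: (i =P j) => [<-|_] /=; rewrite ?mul1n ?mul0n.
have Emod : modq mm' = modq mm.
  apply/mnmP => j; rewrite /mm' !mnmE mulmnE mnm1E.
  case: (i =P j) => [<-|_] /=; rewrite ?mul1n ?mul0n ?subn0 //.
  by rewrite ki -{2}(subnK qi) modnDr.
have Hdeg : (mdeg mm' < N)%N.
  move: hN; rewrite {1}Emm mdegD mdegMn mdeg1 mul1n; lia.
rewrite {1}Emm mpolyXD -mpolyXn -Emod.
apply: (@eqv_trans _ ('X_[mm'] * 1)); last by rewrite mulr1; apply: IH.
apply: eqvM; first exact: eqv_refl.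
by have [j ->] := yv_of ki; apply: Y_eqv.
Qed.

Definition red m := modq (red0 m).

Lemma red_cong m : eqv 'X_[m] (cm m *: 'X_[red m]).
Proof.
apply: eqv_trans (red0_cong m) _; apply: eqvZ; exact: mod_cong.
Qed.


Definition inM (m : 'X_{1.. n}) :=
  [forall i : 'I_n, if (i < k)%N then m i == 0%N else (m i < q)%N].

Lemma yv_neq_x j (i : 'I_n) : (i < k)%N -> (yv k j == i) = false.
Proof. by move=> ik; apply/negbTE/eqP => E; move: (congr1 val E) => /=; lia. Qed.

Lemma Am_x t (i : 'I_n) : (i < k)%N -> Am t i = 0%N.
Proof.
move=> ik; rewrite /Am mnm_sumE big1 // => j _.
by rewrite mulmnE mnm1E yv_neq_x.
Qed.

Lemma red0_x m (i : 'I_n) : (i < k)%N -> red0 m i = 0%N.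
Proof.
move=> ik; rewrite /red0 mnmDE !mnm_sumE !big1 // => j _.
  by rewrite mulmnE mnm1E yv_neq_x.
by rewrite mulmnE Am_x.
Qed.

Lemma red_x m (i : 'I_n) : (i < k)%N -> red m i = 0%N.
Proof.
move=> ik; rewrite /red /modq mnmE.
have -> : (k <= i)%N = false by rewrite leqNgt ik.
exact: red0_x.

Qed.

Lemma red_inM m : inM (red m).
Proof.
apply/forallP => i; case: ifP => ik; first by rewrite red_x.
rewrite /red /modq mnmE.
have -> : (k <= i)%N by rewrite leqNgt ik.
exact: ltn_pmod.
Qed.

Lemma red0_x0 (m : 'X_{1.. n}) : (forall t : 'I_k, m (xv r t) = 0%N) -> red0 m = m.
Proof.
move=> H; rewrite /red0 big1 ?add0m; last by move=> t _; rewrite H mulm0n.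
rewrite {2}(multinomUE_id m) big_split_ord /= [X in (_ = X + _)%MM]big1 ?add0m //.
by move=> t _; have := H t; rewrite /xv => ->; rewrite mulm0n.
Qed.

Lemma xv_lt (t : 'I_k) : (xv r t < k)%N.
Proof. by rewrite /= ltn_ord. Qed.

Lemma inM_red m : inM m -> red m = m /\ cm m = 1.
Proof.
move/forallP => H.
have Hx : forall t : 'I_k, m (xv r t) = 0%N.
  by move=> t; have := H (xv r t); rewrite xv_lt => /eqP.
split; last by rewrite /cm big1 // => t _; rewrite Hx expr0.
rewrite /red red0_x0 //; apply/mnmP => j; rewrite mnmE; case: ifP => // kj.
by rewrite modn_small //; have := H j; rewrite ltnNge kj.
Qed.

Lemma lex_intro (m1 m2 : 'X_{1.. n}) (i : 'I_n) :
  (forall j : 'I_n, (j < i)%N -> m1 j = m2 j) -> (m2 i < m1 i)%N -> lex_gt m1 m2.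
Proof.
move=> H lt; apply/existsP; exists i; rewrite lt andbT.
by apply/forallP => j; apply/implyP => ji; apply/eqP; apply: H.
Qed.

Lemma lex_asym (m1 m2 : 'X_{1.. n}) : lex_gt m1 m2 -> lex_gt m2 m1 -> False.
Proof.
move=> /existsP [i /andP [/forallP H1 l1]] /existsP [j /andP [/forallP H2 l2]].
case: (ltngtP i j) => [ij|ji|/val_inj E].
- by move: (implyP (H2 i) ij) => /eqP E; rewrite E ltnn in l1.
- by move: (implyP (H1 j) ji) => /eqP E; rewrite E ltnn in l2.
- by subst j; move: (ltn_trans l1 l2); rewrite ltnn.
Qed.

Lemma first_diff (m1 m2 : 'X_{1.. n}) : m1 != m2 ->
  exists i : 'I_n, (forall j : 'I_n, (j < i)%N -> m1 j = m2 j) /\ m1 i != m2 i.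
Proof.
move=> ne.
have [i0 Hi0] : exists i, m1 i != m2 i.
  apply/existsP; apply: contraR ne => /existsPn H; apply/eqP/mnmP => i.
  by have := H i; rewrite negbK => /eqP.
case: (@arg_minnP _ i0 (fun i : 'I_n => m1 i != m2 i) (fun i : 'I_n => val i) Hi0) => i Hi Hmin.
exists i; split => // j ji; apply/eqP; apply: contraTT ji => Hj.
by rewrite -leqNgt; apply: Hmin.
Qed.

Lemma red_lt m : ~~ inM m -> lex_gt m (red m).
Proof.
move=> nM.
have ne : m != red m by apply: contraNN nM => /eqP ->; apply: red_inM.
have [i [Hj Hi]] := first_diff ne.
apply: (lex_intro Hj).
case: (ltnP i k) => ik.
  by move: Hi; rewrite red_x // lt0n.
have Hx : forall t : 'I_k, m (xv r t) = 0%N.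
  by move=> t; rewrite Hj ?red_x ?xv_lt //; exact: (leq_trans (xv_lt t) ik).
move: Hi; rewrite /red /modq mnmE ik red0_x0 // => Hi.
by rewrite ltn_neqAle eq_sym Hi leq_mod.
Qed.


Lemma dvd_iff (x y : nat) : (x < q)%N -> (y < q)%N -> (q %| x + (q - y))%N = (x == y).
Proof.
move=> xq yq; case: (x =P y) => [->|ne].
  by rewrite subnKC ?dvdnn // ltnW.
apply/negP => dv.
case: (ltngtP x y) => [xy|yx|E]; last by [].
- have := dvdn_leq _ dv; rewrite addn_gt0 subn_gt0 yq orbT => /(_ isT); lia.
- have dv' : (q %| x + (q - y) - q)%N by rewrite dvdn_sub.
  have := dvdn_leq _ dv'; have -> : (0 < x + (q - y) - q)%N by lia.
  move=> /(_ isT); lia.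
Qed.

Lemma sum_geom d : \sum_(x < q) (w ^+ d) ^+ x = if (q %| d)%N then q%:R else 0.
Proof.
case: ifP => qd.
  have -> : w ^+ d = 1 by apply/eqP; rewrite -(prim_order_dvd hw).
  by under eq_bigr do rewrite expr1n; rewrite sumr_const card_ord.
have ne1 : w ^+ d != 1 by rewrite -(prim_order_dvd hw) qd.
have : (w ^+ d - 1) * \sum_(x < q) (w ^+ d) ^+ x = 0.
  by rewrite -subrX1 exprAC (prim_expr_order hw) expr1n subrr.
by move/eqP; rewrite mulf_eq0 subr_eq0 (negbTE ne1) /= => /eqP.
Qed.

Definition pt (s : {ffun 'I_r -> 'I_q}) (i : 'I_n) : C :=
  match split i with
  | inl t => w ^+ a t * \prod_(j < r) (w ^+ s j) ^+ A t j
  | inr j => w ^+ s j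
  end.

Lemma split_x (t : 'I_k) : split (xv r t) = inl t.
Proof. exact: (unsplitK (inl t)). Qed.
Lemma split_y (j : 'I_r) : split (yv k j) = inr j.
Proof. exact: (unsplitK (inr j)). Qed.

Lemma wq1 d : (w ^+ d) ^+ q = 1.
Proof. by rewrite exprAC (prim_expr_order hw) expr1n. Qed.

Lemma pow1 (x : C) e : x ^+ q = 1 -> (x ^+ e) ^+ q = 1.
Proof. by move=> H; rewrite exprAC H expr1n. Qed.

Lemma pt_sol s : SolL w a A (pt s).
Proof.
split.
  move=> i; rewrite /pt; case: (split i) => [t|j]; last exact: wq1.
  rewrite exprMn wq1 mul1r -prodrXl big1 // => j _.
  by apply: pow1; apply: wq1.
by move=> t; rewrite /pt split_x; congr (_ * _); apply: eq_bigr => j _; rewrite split_y.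
Qed.

Lemma inM_x m (t : 'I_k) : inM m -> m (xv r t) = 0%N.
Proof. by move/forallP/(_ (xv r t)); rewrite xv_lt => /eqP. Qed.
Lemma inM_y m (j : 'I_r) : inM m -> (m (yv k j) < q)%N.
Proof.
move/forallP/(_ (yv k j)).
by have -> : (yv k j < k)%N = false by rewrite /= ltnNge leq_addr.
Qed.

Lemma ord_cases (i : 'I_n) : (exists t, i = xv r t) \/ (exists j, i = yv k j).
Proof.
case: (splitP i) => [t E|j E]; [left; exists t|right; exists j]; exact: val_inj.
Qed.

Lemma inM_eq m e : inM m -> inM e -> (forall j, m (yv k j) = e (yv k j)) -> m = e.
Proof.
move=> mM eM H; apply/mnmP => i.
by case: (ord_cases i) => [[t ->]|[j ->]]; rewrite ?inM_x.
Qed.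

Lemma pt_eval s m : inM m ->
  \prod_i pt s i ^+ m i = \prod_(j < r) (w ^+ s j) ^+ m (yv k j).
Proof.
move=> mM; rewrite big_split_ord /= big1 ?mul1r.
  by apply: eq_bigr => j _; rewrite -[rshift k j]/(yv k j) /pt split_y.
by move=> t _; rewrite -[lshift r t]/(xv r t) inM_x ?expr0.
Qed.


Lemma char_sum m e : inM m -> inM e ->
  \sum_(s : {ffun 'I_r -> 'I_q}) (\prod_i pt s i ^+ m i) *
     \prod_(j < r) (w ^+ s j) ^+ (q - e (yv k j))
  = if m == e then (q%:R) ^+ r else 0.
Proof.
move=> mM eM.
under eq_bigr => s _ do rewrite pt_eval // -big_split /=.
have E : forall s : {ffun 'I_r -> 'I_q},
  \prod_(j < r) ((w ^+ s j) ^+ m (yv k j) * (w ^+ s j) ^+ (q - e (yv k j)))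
  = \prod_(j < r) (w ^+ (m (yv k j) + (q - e (yv k j)))) ^+ s j.
  by move=> s; apply: eq_bigr => j _; rewrite -exprD exprAC.
under eq_bigr => s _ do rewrite E.
rewrite -(bigA_distr_bigA (fun (j : 'I_r) (x : 'I_q) =>
            (w ^+ (m (yv k j) + (q - e (yv k j)))) ^+ x)) /=.
under eq_bigr => j _ do rewrite sum_geom dvd_iff ?inM_y //.
case: eqP => [->|ne].
  by under eq_bigr do rewrite eqxx; rewrite prodr_const card_ord.
have [j nej] : exists j, m (yv k j) != e (yv k j).
  apply/existsP; apply: contra_notT ne => /existsPn H.
  by apply: inM_eq => // j; apply/eqP; have := H j; rewrite negbK.
by rewrite (bigD1 j) //= (negbTE nej) mul0r.
Qed.

Lemma vanish0 g : (forall mo, ~~ inM mo -> g@_mo = 0) ->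
  (forall v, SolL w a A v -> g.@[v] = 0) -> g = 0.
Proof.
move=> Wg Vg; apply/mpolyP => e; rewrite mcoeff0.
case: (boolP (e \in msupp g)) => He; last exact: memN_msupp_eq0.
have eM : inM e.
  apply: contraTT He => /Wg H; by rewrite mcoeff_msupp H eqxx.
pose chi (s : {ffun 'I_r -> 'I_q}) := \prod_(j < r) (w ^+ s j) ^+ (q - e (yv k j)).
have H0 : \sum_(s : {ffun 'I_r -> 'I_q}) g.@[pt s] * chi s = 0.
  by rewrite big1 // => s _; rewrite Vg ?mul0r //; exact: pt_sol.
have inMs : forall m, m \in msupp g -> inM m.
  move=> m Hm; apply: contraTT Hm => /Wg H; by rewrite mcoeff_msupp H eqxx.
have H1 : \sum_(s : {ffun 'I_r -> 'I_q}) g.@[pt s] * chi s =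
    \sum_(m <- msupp g) g@_m * (if m == e then q%:R ^+ r else 0).
  under eq_bigr => s _ do rewrite mevalE mulr_suml.
  rewrite exchange_big /= big_seq [RHS]big_seq; apply: eq_bigr => m Hm.
  rewrite -char_sum ?inMs // mulr_sumr; apply: eq_bigr => s _.
  by rewrite mulrA.
rewrite H1 (bigD1_seq e) ?msupp_uniq //= eqxx big1 ?addr0 in H0; last first.
  by move=> m /negbTE ->; rewrite mulr0.
move/eqP: H0; rewrite mulf_eq0 expf_eq0 pnatr_eq0.
have -> : (q == 0%N) = false by apply/negbTE; rewrite -lt0n.
by rewrite andbF orbF => /eqP.
Qed.


Definition redp (f : Poly) : Poly :=
  \sum_(m <- msupp f) (f@_m * cm m) *: 'X_[red m].

Lemma redp_cong f : eqv f (redp f).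
Proof.
rewrite {1}(mpolyE f) /redp; apply: eqv_sum => m; rewrite -scalerA.
apply: eqvZ; exact: red_cong.
Qed.

Lemma redp_coef f mo :
  (redp f)@_mo = \sum_(m <- msupp f) (f@_m * cm m) * (red m == mo)%:R.
Proof.
rewrite /redp raddf_sum; apply: eq_bigr => m _.
by rewrite /= mcoeffZ mcoeffX.
Qed.

Lemma redp_W f mo : ~~ inM mo -> (redp f)@_mo = 0.
Proof.
move=> nM; rewrite redp_coef big1 // => m _.
have -> : (red m == mo) = false.
  by apply/negbTE; apply: contraNN nM => /eqP <-; apply: red_inM.
by rewrite mulr0.
Qed.

Lemma gens_vanish g : IL_gens w a A g -> vanishing_ideal (SolL w a A) g.
Proof.
case=> [[i ->]|[t ->]] v [H1 H2].
  by rewrite /dom_poly rmorphB rmorphXn rmorph1 /= mevalXU H1 subrr.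
rewrite /Defs.cons_poly rmorphB /= mevalZ rmorph_prod /= mevalXU H2.
by under eq_bigr do rewrite rmorphXn /= mevalXU; rewrite subrr.
Qed.

Lemma Gprime_gens g : g \in Gprime w a A -> IL_gens w a A g.
Proof.
rewrite mem_cat => /orP [/mapP [t _ ->]|/mapP [j _ ->]].
  by right; exists t.
by left; exists (yv k j).
Qed.

Lemma cons_coef t mo : (Defs.cons_poly w a A t)@_mo =
  ((U_(xv r t))%MM == mo)%:R - w ^+ a t * (Am t == mo)%:R.
Proof. by rewrite cons_polyE mcoeffB mcoeffZ !mcoeffX. Qed.

Lemma Am_neq t : (Am t == (U_(xv r t))%MM) = false.
Proof.
apply/negbTE/eqP => E; have := congr1 (fun m : 'X_{1.. n} => m (xv r t)) E.
by rewrite /= Am_x ?xv_lt // mnm1E eqxx.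
Qed.

Lemma cons_LT t : is_lex_LT (Defs.cons_poly w a A t) 'X_(xv r t).
Proof.
have c1 : (Defs.cons_poly w a A t)@_((U_(xv r t))%MM) = 1.
  by rewrite cons_coef eqxx Am_neq mulr0 subr0.
exists (U_(xv r t))%MM; first by rewrite mcoeff_msupp c1 oner_neq0.
split; last by rewrite c1 scale1r.
move=> mo' H ne.
have E : Am t = mo'.
  have ne' : ((U_(xv r t))%MM == mo') = false by rewrite eq_sym (negbTE ne).
  apply/eqP; move: H; rewrite mcoeff_msupp cons_coef ne'.
  by case: (Am t == mo'); rewrite // mulr0 subrr eqxx.
rewrite -E; apply: (@lex_intro _ _ (xv r t)).
  move=> j jt; rewrite Am_x; last exact: (ltn_trans jt (xv_lt t)).
  rewrite mnm1E; case: eqP => // E'; by rewrite E' ltnn in jt.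
by rewrite Am_x ?xv_lt // mnm1E eqxx.
Qed.

Lemma dom_coef (j : 'I_r) mo : (@dom_poly C q k r (yv k j))@_mo =
  ((U_(yv k j) *+ q)%MM == mo)%:R - (0%MM == mo)%:R.
Proof. by rewrite /dom_poly mpolyXn mcoeffB mcoeffX -mpolyX0 mcoeffX. Qed.

Lemma Uq_neq0 (j : 'I_r) : ((U_(yv k j) *+ q)%MM == 0%MM) = false.
Proof.
apply/negbTE/eqP => E; have := congr1 (fun m : 'X_{1.. n} => m (yv k j)) E.
rewrite /= mulmnE mnm1E eqxx mul1n mnm0E => q0; by move: hq; rewrite q0.
Qed.

Lemma dom_LT (j : 'I_r) : is_lex_LT (@dom_poly C q k r (yv k j)) 'X_[U_(yv k j) *+ q].
Proof.
have c1 : (@dom_poly C q k r (yv k j))@_(U_(yv k j) *+ q) = 1.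
  by rewrite dom_coef eqxx eq_sym Uq_neq0 subr0.
exists (U_(yv k j) *+ q)%MM; first by rewrite mcoeff_msupp c1 oner_neq0.
split; last by rewrite c1 scale1r.
move=> mo' H ne.
have E : 0%MM = mo'.
  have ne' : ((U_(yv k j) *+ q)%MM == mo') = false by rewrite eq_sym (negbTE ne).
  apply/eqP; move: H; rewrite mcoeff_msupp dom_coef ne'.
  by case: (0%MM == mo'); rewrite // subrr eqxx.
rewrite -E; apply: (@lex_intro _ _ (yv k j)).
  move=> j' jt; rewrite mulmnE mnm1E mnm0E; case: eqP => // E'.
  by rewrite E' ltnn in jt.
by rewrite mulmnE mnm1E eqxx mul1n mnm0E.
Qed.


Lemma IL_V f : IL w a A f -> vanishing_ideal (SolL w a A) f.
Proof. by apply: ig_vanish; apply: gens_vanish. Qed.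

Lemma J_IL f : J f -> IL w a A f.
Proof. by apply: ig_mono => g Hg; apply: igS; apply: Gprime_gens. Qed.

Lemma J_V f : J f -> vanishing_ideal (SolL w a A) f.
Proof. by move=> H; apply: IL_V; apply: J_IL. Qed.

Lemma redp_vanish f : vanishing_ideal (SolL w a A) f ->
  vanishing_ideal (SolL w a A) (redp f).
Proof.
move=> Vf v Sv; have H := J_V (redp_cong f) Sv.
by move: H; rewrite mevalB Vf // sub0r => /eqP; rewrite oppr_eq0 => /eqP.
Qed.

Lemma V_J f : vanishing_ideal (SolL w a A) f -> J f.
Proof.
move=> Vf; have E : redp f = 0.
  by apply: vanish0; [move=> mo; apply: redp_W | apply: redp_vanish].
by have := redp_cong f; rewrite /eqv E subr0.
Qed.

Lemma LT_notinM f mo : IL w a A f -> mo \in msupp f ->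
  (forall mo', mo' \in msupp f -> mo' != mo -> lex_gt mo mo') -> ~~ inM mo.
Proof.
move=> If Hmo Hmax; apply/negP => mM.
have Vg : vanishing_ideal (SolL w a A) (redp f).
  by apply: redp_vanish; apply: IL_V.
have g0 : redp f = 0.
  by apply: vanish0 => // mo0; apply: redp_W.
have : (redp f)@_mo = f@_mo.
  rewrite redp_coef (bigD1_seq mo) ?msupp_uniq //=.
  have [-> ->] := inM_red mM; rewrite eqxx !mulr1 big_seq_cond big1 ?addr0 //.
  move=> m /andP [Hm ne].
  have -> : (red m == mo) = false; last by rewrite mulr0.
  apply/negbTE/eqP => E.
  case: (boolP (inM m)) => mM'.
    by have [E' _] := inM_red mM'; rewrite E' in E; rewrite E eqxx in ne.
  have := red_lt mM'; rewrite E => gt1.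
  exact: (lex_asym gt1 (Hmax _ Hm ne)).
by rewrite g0 mcoeff0 => /esym /eqP; rewrite mcoeff_eq0 Hmo.
Qed.

Lemma notinM_ex mo : ~~ inM mo ->
  exists i : 'I_n, ~~ (if (i < k)%N then mo i == 0%N else (mo i < q)%N).
Proof. by rewrite /inM negb_forall => /existsP. Qed.

Lemma groebner : is_lex_groebner (Gprime w a A) (IL w a A).
Proof.
split; first by move=> g Hg; apply: J_IL; apply: igS.
move=> h; split.
  apply: ig_mono => t [g Hg LT]; apply: igS; exists g => //.
  by apply: J_IL; apply: igS.
apply: ig_mono => t [f If [mo Hmo [Hmax ->]]].
have [i Hi] := notinM_ex (LT_notinM If Hmo Hmax).
move: Hi; case: ifP => ik Hi.
  have [t0 Et] : exists t0 : 'I_k, i = xv r t0.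
    by exists (Ordinal ik); apply: val_inj.
  have le : (U_(i) <= mo)%MM.
    apply/mnm_lepP => j; rewrite mnm1E; case: eqP => [<-|] //=.
    by rewrite lt0n.
  rewrite -(submK le) mpolyXD scalerAl; apply: igM; apply: igS.
  exists (Defs.cons_poly w a A t0); first exact: cons_in.
  by rewrite Et; apply: cons_LT.
have [j Ej] : exists j : 'I_r, i = yv k j.
  by apply: yv_of; rewrite leqNgt ik.
have le : (U_(i) *+ q <= mo)%MM.
  apply/mnm_lepP => j'; rewrite mulmnE mnm1E; case: eqP => [<-|] //=.
  by rewrite mul1n leqNgt.
rewrite -(submK le) mpolyXD scalerAl; apply: igM; apply: igS.
exists (@dom_poly C q k r (yv k j)); first exact: dom_in.
by rewrite Ej; apply: dom_LT.
Qed.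

End Main.

Unset Implicit Arguments.
Theorem lemma5p4 (R : realType) (p m q : nat) (hp : prime p) (hm : (0 < m)%N)
  (hq : q = (p ^ m)%N) (w : R[i]) (hw : q.-primitive_root w)
  (k r : nat) (a : 'I_k -> 'I_q) (A : 'I_k -> 'I_r -> 'I_q) :
  (forall f, IL w a A f <-> vanishing_ideal (SolL w a A) f) /\
  is_lex_groebner (Gprime w a A) (IL w a A) /\
  (forall f, ideal_gen (fun g => g \in Gprime w a A) f <->
             vanishing_ideal (SolL w a A) f).
Proof.
have q0 : (0 < q)%N by rewrite hq expn_gt0 prime_gt0.
split; first by move=> f; split; [apply: IL_V | move/(V_J q0 hw); apply: J_IL].
split; first exact: groebner.
by move=> f; split; [apply: J_V | apply: V_J].
Qed.
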